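(* Let $\Xi\in\mathcal C$ and write $\Xi=X^\dagger X$ with $X\in\mathcal B(\mathcal H)$. Then $\Xi$ is an extremal point of $\mathcal C$ if and only if $$\mathcal B(\operatorname{Rng}(X))=\operatorname{Span}\Big\{X\Big[\textstyle\bigoplus_{k\in S}(I_{\mathcal H_k}\otimes M_k)\Big]X^\dagger:\ M_k\in\mathcal B(\mathbb C^{m_k})\ \forall k\Big\},$$ where $\mathcal B(\operatorname{Rng}(X))$ is identified with the operators on $\mathcal H$ whose support and range lie in $\operatorname{Rng}(X)$.
   Context: Let $G$ be a group with a unitary representation $g\mapsto U_g$ on a finite-dimensional Hilbert space $\mathcal H$, decomposed as $\mathcal H=\bigoplus_{k\in S}(\mathcal H_k\otimes\mathbb C^{m_k})$, where $S$ is the set of equivalence classes of irreducible components, $\mathcal H_k$ carries the irreducible representation of class $k$ and $m_k$ is its multiplicity, so that $U_g=\bigoplus_k U^{(k)}_g\otimes I_{m_k}$. Let $d_{\mathcal H_k}=\dim\mathcal H_k$, let $P_k$ be the orthogonal projector onto $\mathcal H_k\otimes\mathbb C^{m_k}$, and let $\operatorname{Tr}_{\mathcal H_k}$ be the partial trace $\mathcal B(\mathcal H_k\otimes\mathbb C^{m_k})\to\mathcal B(\mathbb C^{m_k})$. Let $\mathcal C$ be the convex set of operators $\Xi\ge0$ on $\mathcal H$ with $\operatorname{Tr}_{\mathcal H_k}(P_k\Xi P_k)=d_{\mathcal H_k}I_{m_k}$ for all $k\in S$ (the seeds of covariant POVMs $dP_g=U_g^\dagger\Xi U_g\,dg$).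 *)

(* Defs.v *)
From mathcomp Require Import all_boot all_algebra.
From mathcomp Require Import reals.
From mathcomp.real_closed Require Import complex.
Set Implicit Arguments. Unset Strict Implicit. Unset Printing Implicit Defensive.
Import GRing.Theory Num.Theory.
Local Open Scope ring_scope.

(* Index set of an orthonormal basis of H = (+)_{k in S} (H_k (x) C^{m_k}):
   basis vectors e_{k,alpha,a}, alpha < d_k = dim H_k, a < m_k. *)
Definition idxT (S : finType) (d m : S -> nat) : finType :=
  {k : S & ('I_(d k) * 'I_(m k))%type}.

Definition adjmx (C : numClosedFieldType) (p q : nat) (A : 'M[C]_(p, q)) : 'M[C]_(q, p) :=
  \matrix_(i, j) (A j i)^*.

Definition psdmx (C : numClosedFieldType) (n : nat) (A : 'M[C]_n) : Prop :=
  forall v : 'cV[C]_n, 0 <= (adjmx v *m A *m v) 0 0.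

(* Tr_{H_k}(P_k A P_k), an operator on C^{m_k} *)
Definition ptrace (S : finType) (d m : S -> nat) (C : numClosedFieldType) (k : S)
    (A : 'M[C]_#|idxT d m|) : 'M[C]_(m k) :=
  \matrix_(a, b) \sum_(al < d k)
     A (enum_rank (Tagged (fun k => ('I_(d k) * 'I_(m k))%type) (al, a) : idxT d m))
       (enum_rank (Tagged (fun k => ('I_(d k) * 'I_(m k))%type) (al, b) : idxT d m)).

(* the convex set C of seeds of covariant POVMs *)
Definition seedC (R : realType) (S : finType) (d m : S -> nat)
    (Xi : 'M[R[i]]_#|idxT d m|) : Prop :=
  psdmx Xi /\ forall k : S, ptrace k Xi = ((d k)%:R)%:M.

(* the operator (+)_{k in S} (I_{H_k} (x) M_k) *)
Definition blockop (S : finType) (d m : S -> nat) (C : numClosedFieldType)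
    (M : forall k : S, 'M[C]_(m k)) : 'M[C]_#|idxT d m| :=
  \matrix_(i, j)
    (let x : idxT d m := enum_val i in
     let y : idxT d m := enum_val j in
     if tag x == tag y then
       ((tagged x).1 == (tagged_as x y).1)%:R * M (tag x) (tagged x).2 (tagged_as x y).2
     else 0).

Definition extreme_point (R : realType) (n : nat) (P : 'M[R[i]]_n -> Prop)
    (x : 'M[R[i]]_n) : Prop :=
  P x /\ forall (y z : 'M[R[i]]_n) (t : R), P y -> P z -> 0 < t < 1 ->
    x = (t%:C)%C *: y + ((1 - t)%:C)%C *: z -> y = z.

(* column space (range) of A is contained in the column space Rng(V) *)
Definition rng_sub (C : fieldType) (n p q : nat) (A : 'M[C]_(n, p)) (V : 'M[C]_(n, q)) : bool :=
  (A^T <= V^T)%MS.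

(* B(Rng X): operators on H whose range and support (= Rng(A^dagger)) lie in Rng X *)
Definition BRng (C : numClosedFieldType) (n : nat) (X A : 'M[C]_n) : Prop :=
  rng_sub A X /\ rng_sub (adjmx A) X.

Definition in_span (C : numClosedFieldType) (n : nat) (P : 'M[C]_n -> Prop) (A : 'M[C]_n) : Prop :=
  exists (l : nat) (c : 'I_l -> C) (B : 'I_l -> 'M[C]_n),
    (forall j, P (B j)) /\ A = \sum_(j < l) c j *: B j.

(* Main.v *)
From HB Require Import structures.
Require Import Defs.
From mathcomp Require Import all_boot all_order all_algebra.
From mathcomp Require Import reals.
From mathcomp.real_closed Require Import complex.
From mathcomp Require Import ring zify lra.
From Stdlib Require Import FunctionalExtensionality Classical.
Import Order.TTheory GRing.Theory Num.Theory.
Local Open Scope ring_scope.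
Set Implicit Arguments. Unset Strict Implicit.
Section Adj.
Variable C : numClosedFieldType.

Lemma adjmxE p q (A : 'M[C]_(p,q)) i j : adjmx A i j = (A j i)^*.
Proof. by rewrite mxE. Qed.

Lemma adjmxK p q (A : 'M[C]_(p,q)) : adjmx (adjmx A) = A.
Proof. by apply/matrixP=> i j; rewrite !mxE conjCK. Qed.

Lemma adjmxM p q r (A : 'M[C]_(p,q)) (B : 'M[C]_(q,r)) :
  adjmx (A *m B) = adjmx B *m adjmx A.
Proof.
apply/matrixP=> i j; rewrite !mxE rmorph_sum; apply: eq_bigr => k _.
by rewrite !mxE rmorphM mulrC.
Qed.

Lemma adjmxD p q (A B : 'M[C]_(p,q)) : adjmx (A + B) = adjmx A + adjmx B.
Proof. by apply/matrixP=> i j; rewrite !mxE rmorphD. Qed.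

Lemma adjmxN p q (A : 'M[C]_(p,q)) : adjmx (- A) = - adjmx A.
Proof. by apply/matrixP=> i j; rewrite !mxE rmorphN. Qed.

Lemma adjmxB p q (A B : 'M[C]_(p,q)) : adjmx (A - B) = adjmx A - adjmx B.
Proof. by rewrite adjmxD adjmxN. Qed.

Lemma adjmxZ p q a (A : 'M[C]_(p,q)) : adjmx (a *: A) = a^* *: adjmx A.
Proof. by apply/matrixP=> i j; rewrite !mxE rmorphM. Qed.

Lemma adjmx0 p q : adjmx (0 : 'M[C]_(p,q)) = 0.
Proof. by apply/matrixP=> i j; rewrite !mxE rmorph0. Qed.

Lemma adjmx_sum p q I (r : seq I) (P : pred I) (F : I -> 'M[C]_(p,q)) :
  adjmx (\sum_(i <- r | P i) F i) = \sum_(i <- r | P i) adjmx (F i).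
Proof.
apply/matrixP=> i j; rewrite !mxE !summxE rmorph_sum.
by apply: eq_bigr => k _; rewrite mxE.
Qed.

Lemma tr_adjmx n (A : 'M[C]_n) : \tr (adjmx A) = (\tr A)^*.
Proof. by rewrite /mxtrace rmorph_sum; apply: eq_bigr => i _; rewrite mxE. Qed.

Lemma tr_adj_self n p (A : 'M[C]_(n,p)) :
  \tr (adjmx A *m A) = \sum_i \sum_j `|A j i| ^+ 2.
Proof.
rewrite /mxtrace; apply: eq_bigr => i _; rewrite mxE; apply: eq_bigr => j _.
by rewrite mxE mulrC -normCK.
Qed.

Lemma tr_adj_self_eq0 n p (A : 'M[C]_(n,p)) : \tr (adjmx A *m A) = 0 -> A = 0.
Proof.
rewrite tr_adj_self => /eqP; rewrite psumr_eq0 => [/allP H|i _]; last first.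
  by apply: sumr_ge0 => j _; rewrite exprn_ge0.
apply/matrixP=> j i; rewrite mxE.
move: (H i (mem_index_enum _)) => /=; rewrite psumr_eq0 => [/allP /(_ j (mem_index_enum _))|k _].
  by rewrite /= sqrf_eq0 normr_eq0 => /eqP.
by rewrite exprn_ge0.
Qed.
End Adj.

Section Gen.
Variable C : numClosedFieldType.

Lemma quad0 (g b : C) : 0 <= b ->
  (forall r : C, r \is Num.real -> 0 <= r * g + r ^+ 2 * b) -> g = 0.
Proof.
move=> b0 H.
have gr : g \is Num.real.
  have := H 1 (rpred1 _); rewrite mul1r expr1n mul1r => /ger0_real.
  by move=> h; have := rpredB h (ger0_real b0); rewrite addrK.
have b1 : 0 < b + 1 by rewrite ltr_wpDl ?ltr01.
have b1n : b + 1 != 0 by rewrite lt0r_neq0.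
pose r := - g / (b + 1).
have br : b + 1 \is Num.real by rewrite ger0_real // ltW.
have rr : r \is Num.real by rewrite /r rpredM ?rpredN // rpredV.
have := H r rr.
have -> : r * g + r ^+ 2 * b = - (g / (b + 1)) ^+ 2.
  by rewrite /r; field; exact: b1n.
rewrite oppr_ge0 => hle.
have xr : g / (b + 1) \is Num.real by rewrite rpredM // rpredV.
have : (g / (b + 1)) ^+ 2 == 0.
  by rewrite eq_le hle -real_normK // exprn_ge0.
rewrite expf_eq0 /= mulf_eq0 invr_eq0 (negbTE b1n) orbF => /eqP //.
Qed.

Variable n : nat.
Definition qf (Y : 'M[C]_n) (u v : 'cV[C]_n) := (adjmx u *m Y *m v) 0 0.

Lemma psd_qf Y : psdmx Y -> forall u, 0 <= qf Y u u.
Proof. by move=> h u; apply: h. Qed.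

Lemma qf_expand Y v w l : qf Y (v + l *: w) (v + l *: w) =
  qf Y v v + l * qf Y v w + l^* * qf Y w v + (l^* * l) * qf Y w w.
Proof.
rewrite /qf adjmxD adjmxZ !mulmxDl !mulmxDr -!scalemxAl -!scalemxAr scalerA.
set a := adjmx v *m Y *m v; set b := adjmx v *m Y *m w.
set c := adjmx w *m Y *m v; set e := adjmx w *m Y *m w.
rewrite !mxE; ring.
Qed.

Lemma adjmx_delta p q (i : 'I_p) (j : 'I_q) : adjmx (delta_mx i j : 'M[C]_(p,q)) = delta_mx j i.
Proof. by apply/matrixP=> a b; rewrite !mxE rmorph_nat; congr (_%:R); rewrite andbC. Qed.

Lemma psd_ker (Y : 'M[C]_n) v : psdmx Y -> qf Y v v = 0 ->
  Y *m v = 0 /\ adjmx v *m Y = 0.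
Proof.
move=> pY q0.
have key w : qf Y v w = 0 /\ qf Y w v = 0.
  have b0 : 0 <= qf Y w w by apply: pY.
  have h1 : (qf Y v w + qf Y w v) = 0.
    apply: (quad0 b0) => r rr; have := psd_qf pY (v + r *: w).
    suff -> : r * (qf Y v w + qf Y w v) + r ^+ 2 * qf Y w w = qf Y (v + r*:w) (v + r*:w) by [].
    rewrite qf_expand q0 (conj_Creal rr); ring.
  have h2 : 'i * (qf Y v w - qf Y w v) = 0.
    apply: (quad0 b0) => r rr; have := psd_qf pY (v + ('i * r) *: w).
    suff -> : r * ('i * (qf Y v w - qf Y w v)) + r ^+ 2 * qf Y w w = qf Y (v + ('i * r)*:w) (v + ('i * r)*:w) by [].
    rewrite qf_expand q0 rmorphM /= conjCi (conj_Creal rr).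
    have E : 'i ^+ 2 = -1 :> C by exact: sqrCi.
    rewrite -[- 'i * r * ('i * r)]/(- 'i * r * ('i * r)) (_ : - 'i * r * ('i * r) = - ('i ^+ 2) * r ^+ 2); last by ring.
    rewrite E; ring.
  move/eqP: h2; rewrite mulf_eq0 (negbTE (neq0Ci C)) /= subr_eq0 => /eqP h2.
  move: h1; rewrite h2 -mulr2n -mulr_natr => /eqP; rewrite mulf_eq0 pnatr_eq0 orbF => /eqP.
  by [].
split.
  apply/matrixP=> j i; rewrite (ord1 i) [RHS]mxE.
  have := (key (delta_mx j 0)).2; rewrite /qf adjmx_delta -mulmxA -rowE mxE.
  by [].
apply/matrixP=> i j; rewrite (ord1 i) [RHS]mxE.
have := (key (delta_mx j 0)).1; rewrite /qf -colE mxE.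
by [].
Qed.

Lemma sub_of_ker p q (P : 'M[C]_(p,n)) (X : 'M[C]_(q,n)) :
  (forall v : 'cV[C]_n, X *m v = 0 -> P *m v = 0) -> (P <= X)%MS.
Proof.
move=> H; rewrite submxE; apply/eqP/matrixP => i j.
have := H (cokermx X *m delta_mx j 0); rewrite mulmxA mulmx_coker mul0mx => /(_ erefl).
move=> /matrixP /(_ i 0); rewrite mulmxA -colE !mxE => ->.
by [].
Qed.

Lemma L2 (X K : 'M[C]_n) : adjmx X *m X *m K *m (adjmx X *m X) = 0 -> X *m K *m adjmx X = 0.
Proof.
move=> h; apply: tr_adj_self_eq0.
rewrite !adjmxM adjmxK mulmxA mxtrace_mulC !mulmxA.
rewrite -[X in \tr X]mulmxA -[X in \tr (X *m _)]mulmxA mxtrace_mulC !mulmxA.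
rewrite mxtrace_mulC !mulmxA -[adjmx X *m X *m K *m adjmx X *m X](mulmxA _ (adjmx X)) h. by rewrite mul0mx mxtrace0.
Qed.

Lemma la_sep p p' q (V : 'M[C]_(p,q)) (W : 'M[C]_(p',q)) :
  (W <= V)%MS -> ~~ (V <= W)%MS -> exists u : 'rV[C]_q, W *m u^T = 0 /\ V *m u^T != 0.
Proof.
move=> sWV nVW.
have lt : (\rank W < \rank V)%N by rewrite (ltn_leqif (mxrank_leqif_sup sWV)).
have hV := rank_leq_col V.
have : ~~ (kermx W^T <= kermx V^T)%MS.
  apply/negP => /mxrankS; rewrite !mxrank_ker !mxrank_tr.
  move: lt hV; set a := \rank W; set b := \rank V => lt hV; lia.
case/row_subPn => i ni; exists (row i (kermx W^T)); split.
  by apply: trmx_inj; rewrite trmx_mul trmxK trmx0; apply/sub_kermxP; exact: row_sub.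
apply/negP=> /eqP h; move/negP: ni; apply; apply/sub_kermxP.
by apply: trmx_inj; rewrite trmx_mul trmxK trmx0.
Qed.

Lemma quad_sum (w : 'cV[C]_n) : (adjmx w *m w) 0 0 = \sum_i `|w i 0| ^+ 2.
Proof. by rewrite mxE; apply: eq_bigr => i _; rewrite mxE normCK mulrC. Qed.

Lemma tri_entry (w : 'cV[C]_n) H :
  (adjmx w *m H *m w) 0 0 = \sum_i \sum_j (w i 0)^* * H i j * w j 0.
Proof.
rewrite mxE exchange_big; apply: eq_bigr => j _; rewrite mxE mulr_suml.
by apply: eq_bigr => i _; rewrite mxE.
Qed.

Lemma normM_le (a b : C) : `|a| * `|b| <= `|a| ^+ 2 + `|b| ^+ 2.
Proof.
case/orP: (real_leVge (normr_real a) (normr_real b)) => [hab|hba].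
  apply: le_trans (_ : `|b| ^+ 2 <= _); last by rewrite lerDr exprn_ge0.
  by rewrite expr2 ler_wpM2r.
apply: le_trans (_ : `|a| ^+ 2 <= _); last by rewrite lerDl exprn_ge0.
by rewrite expr2 ler_wpM2l.
Qed.

Lemma psd_pert (X H : 'M[C]_n) (e : C) : adjmx H = H -> 0 <= e ->
  e * (2 * \sum_i \sum_j `|H i j|) <= 1 ->
  psdmx (adjmx X *m (1%:M + e *: H) *m X).
Proof.
move=> hH e0 he v; set w := X *m v.
have -> : adjmx v *m (adjmx X *m (1%:M + e *: H) *m X) *m v =
          adjmx w *m w + e *: (adjmx w *m H *m w).
  rewrite /w adjmxM !mulmxA -[adjmx v *m adjmx X *m (1%:M + e *: H) *m X *m v]mulmxA.
  rewrite mulmxDr mulmx1 mulmxDl -scalemxAr scalemxAl !mulmxA.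
  by rewrite -!scalemxAl.
set S0 := \sum_i `|w i 0| ^+ 2.
have S0ge : 0 <= S0 by apply: sumr_ge0 => i _; rewrite exprn_ge0.
have hs := quad_sum w.
set z := (adjmx w *m H *m w) 0 0.
have zr : z \is Num.real.
  rewrite CrealE; apply/eqP.
  have -> : z^* = (adjmx (adjmx w *m H *m w)) 0 0 by rewrite mxE.
  by rewrite /z /w !adjmxM !adjmxK hH !mulmxA.
have wi i : `|w i 0| ^+ 2 <= S0.
  by rewrite /S0 (bigD1 i) //= lerDl sumr_ge0 // => j _; rewrite exprn_ge0.
set K := \sum_i \sum_j `|H i j|.
have hzb : `|z| <= 2 * K * S0.
  rewrite /z tri_entry; apply: le_trans (ler_norm_sum _ _ _) _.
  rewrite [2 * K]mulrC -mulrA /K mulr_suml; apply: ler_sum => i _.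
  apply: le_trans (ler_norm_sum _ _ _) _.
  rewrite mulr_suml; apply: ler_sum => j _.
  rewrite !normrM norm_conjC mulrAC mulrC.
  apply: ler_wpM2l; first by rewrite normr_ge0.
  apply: le_trans (normM_le _ _) _.
  by rewrite mulr2n mulrDl mul1r lerD.
rewrite [X in 0 <= X]mxE hs [X in 0 <= _ + X]mxE -/z.
have ez : `|e * z| <= S0.
  rewrite normrM ger0_norm //; apply: le_trans (ler_wpM2l e0 hzb) _.
  by rewrite mulrA -[X in _ <= X]mul1r ler_wpM2r // mulrC.
have := real_lerNnormlW (rpredM (ger0_real e0) zr) ez.
by move=> h; rewrite -(lerD2l S0) addrN in h.
Qed.
End Gen.
Section Blk.
Variables (C : numClosedFieldType) (S : finType) (d m : S -> nat).
Local Notation I := (idxT d m).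
Local Notation T k := ('I_(d k) * 'I_(m k))%type.
Definition rk (k : S) (t : T k) : 'I_#|I| := enum_rank (Tagged (fun k => T k) t : I).

Lemma sum_idx (F : 'I_#|I| -> C) :
  \sum_i F i = \sum_k \sum_(t : T k) F (rk t).
Proof.
rewrite (reindex (@enum_rank I)) /=; last first.
  by exists enum_val => x _; rewrite ?enum_valK ?enum_rankK.
rewrite (sig_big_dep xpredT (fun k (t : T k) => true) (fun k (t : T k) => F (rk t))) /=.
by apply: eq_bigr => -[k t] _.
Qed.

Lemma split_pair (A B : finType) (F : A * B -> C) :
  \sum_(t : A * B) F t = \sum_a \sum_b F (a, b).
Proof. by rewrite pair_bigA; apply: eq_bigr => -[]. Qed.

Lemma blockopE_dummy : True. Proof. by []. Qed.
Lemma blockopE (M : forall k, 'M[C]_(m k)) k k' (t : T k) (t' : T k') :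
  blockop d M (rk t) (rk t') =
  if k =P k' is ReflectT e then
    ((t.1 == (eq_rect_r (fun k => T k) t' e).1)%:R * M k t.2 (eq_rect_r (fun k => T k) t' e).2)
  else 0.
Proof.
rewrite mxE /rk !enum_rankK /=; case: eqP => //= e.
by rewrite /tagged_as /=; case: eqP => // e'; rewrite (eq_irrelevance e e').
Qed.

Lemma blockopEs (M : forall k, 'M[C]_(m k)) k (t t' : T k) :
  blockop d M (rk t) (rk t') = (t.1 == t'.1)%:R * M k t.2 t'.2.
Proof.
rewrite blockopE; case: eqP => // e.
by rewrite [e]eq_axiomK.
Qed.

Lemma blockopEd (M : forall k, 'M[C]_(m k)) k k' (t : T k) (t' : T k') :
  k != k' -> blockop d M (rk t) (rk t') = 0.
Proof. by move=> /negbTE nk; rewrite blockopE; case: eqP => // e; rewrite e eqxx in nk. Qed.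

Lemma ptraceE k (A : 'M[C]_#|I|) a b :
  ptrace k A a b = \sum_(al < d k) A (rk (al, a)) (rk (al, b)).
Proof. by rewrite mxE. Qed.

Lemma tr_blockop (A : 'M[C]_#|I|) (M : forall k, 'M[C]_(m k)) :
  \tr (A *m blockop d M) = \sum_k \tr (ptrace k A *m M k).
Proof.
rewrite /mxtrace sum_idx; apply: eq_bigr => k _.
rewrite (eq_bigr (fun t : T k => \sum_k' \sum_(t' : T k') A (rk t) (rk t') * blockop d M (rk t') (rk t))); last first.
  by move=> t _; rewrite mxE sum_idx.
rewrite (eq_bigr (fun t : T k => \sum_(t' : T k) A (rk t) (rk t') * blockop d M (rk t') (rk t))); last first.
  move=> t _; rewrite (bigD1 k) //= [X in _ + X]big1 ?addr0 // => k' nk.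
  by apply: big1 => t' _; rewrite blockopEd ?mulr0 // eq_sym.
under eq_bigr do under eq_bigr do rewrite blockopEs.
transitivity (\sum_(t : T k) \sum_(b < m k) A (rk t) (rk (t.1, b)) * M k b t.2).
  apply: eq_bigr => -[al a] _ /=.
  rewrite split_pair /=.
  rewrite (bigD1 al) //= [X in _ + X]big1 ?addr0; first by apply: eq_bigr => b _; rewrite eqxx mul1r.
  by move=> be nbe; apply: big1 => b _; rewrite (negbTE nbe) mul0r mulr0.
rewrite split_pair /=.
rewrite exchange_big; apply: eq_bigr => a _; rewrite mxE.
rewrite exchange_big; apply: eq_bigr => b _; rewrite mxE mulr_suml.
by apply: eq_bigr => al _.
Qed.

Lemma ptraceD k (A B : 'M[C]_#|I|) : ptrace k (A + B) = ptrace k A + ptrace k B.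
Proof. by apply/matrixP=> a b; rewrite !mxE -big_split; apply: eq_bigr => al _; rewrite mxE. Qed.
Lemma ptraceZ k c (A : 'M[C]_#|I|) : ptrace k (c *: A) = c *: ptrace k A.
Proof. by apply/matrixP=> a b; rewrite !mxE mulr_sumr; apply: eq_bigr => al _; rewrite mxE. Qed.
Lemma ptraceN k (A : 'M[C]_#|I|) : ptrace k (- A) = - ptrace k A.
Proof. by rewrite -scaleN1r ptraceZ scaleN1r. Qed.
Lemma ptraceB k (A B : 'M[C]_#|I|) : ptrace k (A - B) = ptrace k A - ptrace k B.
Proof. by rewrite ptraceD ptraceN. Qed.
Lemma ptrace_adj k (A : 'M[C]_#|I|) : ptrace k (adjmx A) = adjmx (ptrace k A).
Proof. by apply/matrixP=> a b; rewrite !mxE rmorph_sum; apply: eq_bigr => al _; rewrite mxE. Qed.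

Lemma ptrace_eq0 (A : 'M[C]_#|I|) :
  (forall M : forall k, 'M[C]_(m k), \tr (A *m blockop d M) = 0) -> forall k, ptrace k A = 0.
Proof.
move=> H k0; apply/matrixP=> a b; rewrite [RHS]mxE.
pose M k : 'M[C]_(m k) := \matrix_(i, j) ((k == k0) && (val i == val b) && (val j == val a))%:R.
move: (H M); rewrite tr_blockop (bigD1 k0) //= [X in _ + X]big1 ?addr0; last first.
  move=> k nk; rewrite /mxtrace big1 // => i _; rewrite mxE big1 // => j _.
  by rewrite /M !mxE (negbTE nk) /= mulr0.
move=> <-; rewrite /mxtrace (bigD1 a) //= [X in _ = _ + X]big1 ?addr0; last first.
  move=> i ni; rewrite mxE big1 // => j _; rewrite /M !mxE eqxx /=.
  by rewrite !(inj_eq val_inj) (negbTE ni) andbF mulr0.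
rewrite [RHS]mxE (bigD1 b) //= [X in _ = _ + X]big1 ?addr0; last first.
  by move=> j nj; rewrite /M !mxE eqxx /= !(inj_eq val_inj) (negbTE nj) mulr0.
by rewrite /M !mxE !eqxx mulr1.
Qed.

Lemma tr_blockop_ptrace0 (A : 'M[C]_#|I|) M :
  (forall k, ptrace k A = 0) -> \tr (A *m blockop d M) = 0.
Proof. by move=> H; rewrite tr_blockop big1 // => k _; rewrite H mul0mx mxtrace0. Qed.

Lemma blockop_lin a (M M' : forall k, 'M[C]_(m k)) :
  blockop d (fun k => a *: M k + M' k) = a *: blockop d M + blockop d M'.
Proof.
apply/matrixP=> i j; rewrite !mxE /=; case: ifP => _; last by rewrite mulr0 addr0.
by rewrite !mxE mulrDr mulrCA.
Qed.

Lemma blockop_sum l (c : 'I_l -> C) (M : 'I_l -> forall k, 'M[C]_(m k)) :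
  \sum_(j < l) c j *: blockop d (M j) = blockop d (fun k => \sum_(j < l) c j *: M j k).
Proof.
elim: l c M => [|l IH] c M.
  rewrite big_ord0; apply/matrixP=> i j; rewrite !mxE /=; case: ifP => _ //.
  by rewrite big_ord0 mxE mulr0.
rewrite big_ord_recl IH.
rewrite -(blockop_lin (c ord0) (M ord0) (fun k => \sum_(j < l) c (lift ord0 j) *: M (lift ord0 j) k)).
by congr blockop; apply: functional_extensionality_dep => k; rewrite big_ord_recl.
Qed.
End Blk.

Section Extra.
Variable C : numClosedFieldType.

Lemma vec_pair p q (P Q : 'M[C]_(p,q)) : (mxvec P *m (mxvec Q)^T) 0 0 = \tr (P *m Q^T).
Proof.
rewrite mxE (reindex _ (curry_mxvec_bij _ _)) /= split_pair /mxtrace.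
apply: eq_bigr => i _; rewrite mxE; apply: eq_bigr => j _.
by rewrite !mxE !mxvecE.
Qed.

Variable n : nat.

Lemma BRng_of_form (X K : 'M[C]_n) : BRng X (X *m K *m adjmx X).
Proof.
split; rewrite /rng_sub.
  by rewrite !trmx_mul mulmxA submxMl.
by rewrite !adjmxM adjmxK !trmx_mul ?mulmxA submxMl.
Qed.

Lemma BRng_form (X A : 'M[C]_n) : BRng X A -> exists K, A = X *m K *m adjmx X.
Proof.
case; rewrite /rng_sub => /submxP [D hD] /submxP [E hE].
have hA : A = X *m D^T by rewrite -[A]trmxK hD trmx_mul trmxK.
have hA' : (A <= adjmx X)%MS.
  have : adjmx A = X *m E^T by rewrite -[adjmx A]trmxK hE trmx_mul trmxK.
  move=> /(congr1 (@adjmx _ _ _)); rewrite adjmxK adjmxM => ->.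
  exact: submxMl.
exists (D^T *m pinvmx (adjmx X)).
by rewrite -[LHS](mulmxKpV hA') {1}hA !mulmxA.
Qed.

Lemma qf_lin (A B : 'M[C]_n) a b u v : qf (a *: A + b *: B) u v = a * qf A u v + b * qf B u v.
Proof.
rewrite /qf mulmxDr mulmxDl -!scalemxAr -!scalemxAl.
set P := adjmx u *m A *m v; set Q := adjmx u *m B *m v.
by rewrite !mxE.
Qed.
End Extra.

Section Main.
Variables (R : realType) (S : finType) (d m : S -> nat).
Local Notation C := (R[i] : numClosedFieldType).
Local Notation n := #|idxT d m|.

Lemma blockop0 : blockop d (fun k => 0 : 'M[C]_(m k)) = 0.
Proof. apply/matrixP=> i j; rewrite !mxE /=; case: ifP => _ //; by rewrite mxE mulr0. Qed.

Lemma span_form (X A : 'M[C]_n) :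
  in_span (fun B => exists M, B = X *m blockop d M *m adjmx X) A ->
  exists M, A = X *m blockop d M *m adjmx X.
Proof.
case=> l [c [B [hB ->]]]; elim: l c B hB => [|l IH] c B hB.
  by exists (fun k => 0); rewrite big_ord0 blockop0 mulmx0 mul0mx.
rewrite big_ord_recl; have [M0 h0] := hB ord0.
have [M' h'] := IH (fun j => c (lift ord0 j)) (fun j => B (lift ord0 j)) (fun j => hB _).
exists (fun k => c ord0 *: M0 k + M' k).
by rewrite blockop_lin mulmxDr mulmxDl -scalemxAr -scalemxAl h0 h'.
Qed.

Variable hd : forall k, (0 < d k)%N.
Definition ok0 k : 'I_(d k) := Ordinal (hd k).
Definition blk (N : 'M[C]_n) : 'M[C]_n :=
  blockop d (fun k => \matrix_(a, b) N (rk (ok0 k, a)) (rk (ok0 k, b)) : 'M[C]_(m k)).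

Lemma blk_blockop M : blk (blockop d M) = blockop d M.
Proof.
rewrite /blk; congr blockop; apply: functional_extensionality_dep => k.
by apply/matrixP => a b; rewrite mxE blockopEs eqxx mul1r.
Qed.

Lemma blk_lin a N N' : blk (a *: N + N') = a *: blk N + blk N'.
Proof.
rewrite /blk -blockop_lin; congr blockop; apply: functional_extensionality_dep => k.
by apply/matrixP => x y; rewrite !mxE.
Qed.

Lemma dir2 (Xi X : 'M[C]_n) : seedC Xi -> Xi = adjmx X *m X ->
  (forall A : 'M[C]_n, BRng X A <->
     in_span (fun B => exists M : forall k : S, 'M[C]_(m k),
                 B = X *m @blockop S d m _ M *m adjmx X) A) ->
  extreme_point (@seedC R S d m) Xi.
Proof.
move=> hXi eXi HS; split => // y z t [py hy] [pz hz] /andP [t0 t1] E.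
set c1 := (t%:C)%C; set c2 := ((1 - t)%:C)%C.
have c1p : 0 < c1 by rewrite /c1 (_ : 0 = (0:R)%:C)%C // ltcR.
have c2p : 0 < c2 by rewrite /c2 (_ : 0 = (0:R)%:C)%C // ltcR subr_gt0.
have ker (v : 'cV[C]_n) : X *m v = 0 -> (y *m v = 0 /\ adjmx v *m y = 0) /\ (z *m v = 0 /\ adjmx v *m z = 0).
  move=> Xv.
  have q0 : qf Xi v v = 0.
    by rewrite /qf eXi mulmxA -[_ *m X *m v]mulmxA Xv mulmx0 mxE.
  have ay := psd_qf py v; have az := psd_qf pz v.
  move: q0; rewrite E qf_lin => /eqP; rewrite paddr_eq0; last 2 first.
    by rewrite mulr_ge0 // ltW.
    by rewrite mulr_ge0 // ltW.
  rewrite !mulf_eq0 (gt_eqF c1p) (gt_eqF c2p) /= => /andP [/eqP qy /eqP qz].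
  by split; apply: psd_ker.
set D := y - z.
have hD (v : 'cV[C]_n) : X *m v = 0 -> D *m v = 0.
  by move=> Xv; have [[h1 _] [h2 _]] := ker v Xv; rewrite /D mulmxBl h1 h2 subrr.
have hDa (v : 'cV[C]_n) : X *m v = 0 -> adjmx D *m v = 0.
  move=> Xv; have [[_ h1] [_ h2]] := ker v Xv.
  by rewrite -[v]adjmxK -adjmxM /D mulmxBr h1 h2 subrr adjmx0.
have s1 := sub_of_ker hD; have s2 := sub_of_ker hDa.
case/submxP: s2 => E' hE.
have hD' : D = adjmx X *m adjmx E'.
  by rewrite -[D]adjmxK hE adjmxM.
have [Cm hDD] : exists Cm, D = adjmx X *m Cm *m X.
  by exists (adjmx E' *m pinvmx X); rewrite -[LHS](mulmxKpV s1) {1}hD' !mulmxA.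
have [M hM] := span_form ((HS _).1 (BRng_of_form X D)).
have pt k : ptrace k D = 0 by rewrite /D ptraceB hy hz subrr.
have pta k : ptrace k (adjmx D) = 0 by rewrite ptrace_adj pt adjmx0.
have t0' := tr_blockop_ptrace0 M pta.
apply/eqP; rewrite -subr_eq0; apply/eqP; apply: tr_adj_self_eq0; rewrite -/D.
have e1 : \tr (adjmx D *m D) = \tr (adjmx (X *m D *m adjmx X) *m Cm).
  rewrite {2}hDD !adjmxM adjmxK !mulmxA.
  by rewrite mxtrace_mulC !mulmxA.
rewrite e1 hM !adjmxM adjmxK !mulmxA.
set B := blockop d M.
have e2 : \tr (X *m adjmx B *m adjmx X *m Cm) = \tr (adjmx B *m D).
  by rewrite hDD -!mulmxA mxtrace_mulC !mulmxA.
rewrite e2 (_ : adjmx B *m D = adjmx (adjmx D *m B)); last by rewrite adjmxM adjmxK.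
by rewrite tr_adjmx t0' rmorph0.
Qed.
Lemma dir1 (Xi X : 'M[C]_n) : seedC Xi -> Xi = adjmx X *m X ->
  extreme_point (@seedC R S d m) Xi ->
  (forall A : 'M[C]_n, BRng X A <->
     in_span (fun B => exists M : forall k : S, 'M[C]_(m k),
                 B = X *m @blockop S d m _ M *m adjmx X) A).
Proof.
move=> hXi eXi [_ hext] A; split; last first.
  by move=> /span_form [M ->]; exact: BRng_of_form.
move=> /BRng_form [K0 hA].
case: (classic (exists M : forall k : S, 'M[C]_(m k), A = X *m blockop d M *m adjmx X)) => [[M hM]|nW].
  exists 1%N, (fun _ => 1), (fun _ => A); split; first by move=> _; exists M.
  by rewrite big_ord1 scale1r.
exfalso.
set G := adjmx X *m X.
have eG : G = adjmx X *m X by [].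
have adjG : adjmx G = G by rewrite eG adjmxM adjmxK.
clearbody G.
pose f1 (K : 'M[C]_n) := G *m K *m G.
pose f2 (N : 'M[C]_n) := f1 (blk N).
have lin1 : linear f1.
  by move=> a x y; rewrite /f1 mulmxDr mulmxDl -scalemxAr -scalemxAl.
have lin2 : linear f2.
  by move=> a x y; rewrite /f2 blk_lin lin1.
pose f1L : {linear 'M[C]_n -> 'M[C]_n} := HB.pack f1 (GRing.isLinear.Build _ _ _ _ f1 lin1).
pose f2L : {linear 'M[C]_n -> 'M[C]_n} := HB.pack f2 (GRing.isLinear.Build _ _ _ _ f2 lin2).
set Vm := lin_mx f1L; set Wm := lin_mx f2L.
have mV x : x *m Vm = mxvec (f1 (vec_mx x)) := mul_rV_lin f1L x.
have mW x : x *m Wm = mxvec (f2 (vec_mx x)) := mul_rV_lin f2L x.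
have mV' P : mxvec P *m Vm = mxvec (f1 P) := mul_vec_lin f1L P.
have mW' P : mxvec P *m Wm = mxvec (f2 P) := mul_vec_lin f2L P.
have sWV : (Wm <= Vm)%MS.
  apply/row_subP => i; rewrite rowE mW /f2 -mV'; exact: submxMl.
have nVW : ~~ (Vm <= Wm)%MS.
  apply/negP => sVW.
  have : (mxvec (f1 K0) <= Wm)%MS by rewrite -mV' (submx_trans (submxMl _ _) sVW).
  case/submxP => x; rewrite mW => /(can_inj mxvecK) hx.
  have h0 : G *m (K0 - blk (vec_mx x)) *m G = 0.
    by rewrite mulmxBr mulmxBl; move: hx; rewrite /f2 /f1 => ->; rewrite subrr.
  rewrite eG in h0; move/L2: h0; rewrite mulmxBr mulmxBl -hA => /eqP; rewrite subr_eq0 => /eqP hA'.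
  apply: nW; eexists; exact: hA'.
have [u [hWu hVu]] := la_sep sWV nVW.
set K := (vec_mx u)^T.
have pair P : (mxvec P *m u^T) 0 0 = \tr (P *m K).
  by rewrite -{1}[u]vec_mxK vec_pair.
set D0 := f1 K.
have trW N : \tr (f2 N *m K) = 0.
  have h : mxvec N *m Wm *m u^T = 0 by rewrite -mulmxA hWu mulmx0.
  have e := congr1 (fun M : 'M[C]_1 => M 0 0) h; rewrite /= mW' pair in e.
  by rewrite e mxE.
have trD M : \tr (D0 *m blockop d M) = 0.
  rewrite -(trW (blockop d M)) /f2 blk_blockop /D0 /f1.
  rewrite -[G *m K *m G *m _]mulmxA -[G *m blockop d M *m G *m K]mulmxA mxtrace_mulC.
  by rewrite !mulmxA.
have ptD := ptrace_eq0 trD.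
have D0nz : D0 != 0.
  apply/negP => /eqP h0; move/matrix0Pn: hVu => [j [i0 hj]].
  move: hj; rewrite (ord1 i0).
  have -> : (Vm *m u^T) j 0 = (row j Vm *m u^T) 0 0 by rewrite -row_mul [RHS]mxE.
  have e : \tr (f1 (vec_mx (delta_mx 0 j)) *m K) = \tr (vec_mx (delta_mx 0 j) *m D0).
    by rewrite /D0 /f1 -!mulmxA mxtrace_mulC !mulmxA.
  by rewrite rowE mV pair e h0 mulmx0 mxtrace0 eqxx.
have fadj P : f1 (adjmx P) = adjmx (f1 P) by rewrite /f1 !adjmxM adjG mulmxA.
have f1D P Q : f1 (P + Q) = f1 P + f1 Q := linearD f1L P Q.
have f1B P Q : f1 (P - Q) = f1 P - f1 Q := linearB f1L P Q.
have f1Z a P : f1 (a *: P) = a *: f1 P.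
  by rewrite /f1 -scalemxAr -scalemxAl.
have [Kh [hKh [nz pth]]] : exists Kh, adjmx Kh = Kh /\ f1 Kh != 0 /\ forall k, ptrace k (f1 Kh) = 0.
  case: (eqVneq (f1 (K + adjmx K)) 0) => h1.
    exists ('i *: (K - adjmx K)); split.
      by rewrite adjmxZ adjmxB adjmxK conjCi scaleNr -scalerN opprB.
    split.
      rewrite f1Z f1B fadj scaler_eq0 negb_or neq0Ci /=.
      apply/negP => /eqP h2; move: h1; rewrite f1D fadj -/D0 => h1.
      rewrite -/D0 in h2.
      have e : D0 + D0 = (D0 + adjmx D0) + (D0 - adjmx D0) by rewrite addrACA subrr addr0.
      rewrite h1 h2 addr0 -mulr2n -scaler_nat in e.
      move/eqP: e; rewrite scaler_eq0 pnatr_eq0 /= => /eqP e.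
      by rewrite e eqxx in D0nz.
    by move=> k; rewrite f1Z f1B fadj ptraceZ ptraceB ptrace_adj ptD adjmx0 subrr scaler0.
  exists (K + adjmx K); split; first by rewrite adjmxD adjmxK addrC.
  split => // k; by rewrite f1D fadj ptraceD ptrace_adj ptD adjmx0 addr0.
set H := X *m Kh *m adjmx X.
have hH : adjmx H = H by rewrite /H !adjmxM adjmxK hKh mulmxA.
have hHN : adjmx (- H) = - H by rewrite adjmxN hH.
set Kc := 2 * \sum_i \sum_j `|H i j|.
have Kc0 : 0 <= Kc by rewrite mulr_ge0 ?ler0n // sumr_ge0 // => i _; rewrite sumr_ge0.
have Kc1 : Kc + 1 != 0 by rewrite lt0r_neq0 // ltr_wpDl ?ltr01.
set e : C := (Kc + 1)^-1.
have e0 : 0 < e by rewrite invr_gt0 ltr_wpDl ?ltr01.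
have he : e * Kc <= 1.
  apply: le_trans (_ : e * (Kc + 1) <= 1); last by rewrite mulVf.
  by apply: ler_wpM2l; [exact: ltW | rewrite lerDl ler01].
have heN : e * (2 * \sum_i \sum_j `|(- H) i j|) <= 1.
  rewrite (_ : \sum_i \sum_j `|(- H) i j| = \sum_i \sum_j `|H i j|); first exact: he.
  by apply: eq_bigr => i _; apply: eq_bigr => j _; rewrite mxE normrN.
set Y := adjmx X *m (1%:M + e *: H) *m X.
set Z := adjmx X *m (1%:M + e *: (- H)) *m X.
have pY : psdmx Y := psd_pert X hH (ltW e0) he.
have pZ : psdmx Z := psd_pert X hHN (ltW e0) heN.
have fH : adjmx X *m H *m X = f1 Kh by rewrite /H /f1 eG !mulmxA.
have hY : Y = Xi + e *: f1 Kh.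
  by rewrite /Y mulmxDr mulmx1 mulmxDl -scalemxAr -scalemxAl fH eXi.
have hZ : Z = Xi - e *: f1 Kh.
  by rewrite /Z scalerN mulmxDr mulmx1 mulmxDl mulmxN mulNmx -scalemxAr -scalemxAl fH eXi.
have sY : seedC Y.
  split; first exact: pY.
  by move=> k; rewrite hY ptraceD ptraceZ pth scaler0 addr0; exact: hXi.2.
have sZ : seedC Z.
  split; first exact: pZ.
  by move=> k; rewrite hZ ptraceB ptraceZ pth scaler0 subr0; exact: hXi.2.
have t01 : (0 < (2^-1 : R)) && ((2^-1 : R) < 1).
  have h1 : (0 : R) < 2^-1 by lra.
  have h2 : (2^-1 : R) < 1 by lra.
  by rewrite h1 h2.
have h12 : (1 - 2^-1 : R) = 2^-1 by field.
have hc : ((2^-1 : R)%:C + (2^-1 : R)%:C)%C = 1 :> C.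
  by rewrite -raddfD /= (_ : 2^-1 + 2^-1 = 1 :> R) //; field.
have E : Xi = ((2^-1 : R)%:C)%C *: Y + ((1 - 2^-1 : R)%:C)%C *: Z.
  rewrite h12 -scalerDr hY hZ addrACA subrr addr0 scalerDr -scalerDl.
  by rewrite [X in X *: Xi]hc scale1r.
have YZ := hext Y Z (2^-1) sY sZ t01 E.
move: YZ; rewrite hY hZ => /addrI /eqP; rewrite -subr_eq0 opprK -mulr2n -scaler_nat.
rewrite !scaler_eq0 pnatr_eq0 (negbTE nz) (gt_eqF e0) /=.
by [].
Qed.
End Main.

Unset Implicit Arguments.

Theorem theorem2 (R : realType) (S : finType) (d m : S -> nat)
    (hd : forall k, (0 < d k)%N) (hm : forall k, (0 < m k)%N)
    (Xi X : 'M[R[i]]_#|idxT d m|) :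
  seedC Xi -> Xi = adjmx X *m X ->
  (extreme_point (@seedC R S d m) Xi <->
   forall A : 'M[R[i]]_#|idxT d m|,
     BRng X A <->
     in_span (fun B => exists M : forall k : S, 'M[R[i]]_(m k),
                 B = X *m @blockop S d m _ M *m adjmx X) A).
Proof.
move=> hXi eXi; split.
  exact: (dir1 hd hXi eXi).
exact: dir2.
Qed.
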